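(* Let $\kappa$ and $\lambda$ be infinite cardinals with $\kappa^{<\lambda}=\kappa\geq\lambda$, and let $P$ be the set of all partial functions from $\kappa$ to $\kappa$ of cardinality less than $\lambda$. Let $d\geq1$ and let $\kappa_1,\dots,\kappa_d$ be cardinals such that $\kappa_1=\kappa^+$ and, for every $i<d$, there is a cardinal $\mu_i\geq 2^{\kappa_i}$ with $\kappa_{i+1}=\mu_i^+$ and $\mu_i^{\kappa_i}=\mu_i$. Then for every function $p:\kappa_1\times\cdots\times\kappa_d\to P$ there exist stationary sets $\kappa_1'\subseteq\kappa_1,\dots,\kappa_d'\subseteq\kappa_d$ such that $\bigcup p[\kappa_1'\times\cdots\times\kappa_d']$ is a function.
   Context: Partial functions are identified with their graphs; $p[A]$ denotes the image $\{p(x):x\in A\}$. A subset of a regular uncountable cardinal $\nu$ is stationary if it meets every closed unbounded subset of $\nu$. $\kappa^{<\lambda}=\sup_{\nu<\lambda}\kappa^\nu$. *)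

(* Defs.v *)
(* Cardinals are modelled by types
   (cardinality = existence of injections); the ordinals kappa_i carrying
   stationarity are modelled by well-ordered types of the right order type. *)
From mathcomp Require Import all_boot.

Definition inj (A B : Type) : Prop :=
  exists f : A -> B, forall x y, f x = f y -> x = y.

Definition infinite (A : Type) : Prop := inj nat A.

Definition lt_card (A B : Type) : Prop := inj A B /\ ~ inj B A.

Definition strict_wellorder (W : Type) (lt : W -> W -> Prop) : Prop :=
  (forall x, ~ lt x x) /\
  (forall x y z, lt x y -> lt y z -> lt x z) /\
  (forall x y, lt x y \/ x = y \/ lt y x) /\
  well_founded lt.

(* (W, lt) is (order-isomorphic to) the ordinal |M|^+ : a well-order all of
   whose proper initial segments have size <= |M|, while |W| > |M|. *)
Definition is_succ_card (M W : Type) (lt : W -> W -> Prop) : Prop :=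
  strict_wellorder W lt /\
  (forall x : W, inj {y : W | lt y x} M) /\
  ~ inj W M.

Definition club (W : Type) (lt : W -> W -> Prop) (C : W -> Prop) : Prop :=
  (forall x, exists y, C y /\ lt x y) /\
  (forall x, (exists y, lt y x) ->
             (forall y, lt y x -> exists z, C z /\ lt y z /\ lt z x) ->
             C x).

Definition stationary (W : Type) (lt : W -> W -> Prop) (S : W -> Prop) : Prop :=
  forall C, club W lt C -> exists x, C x /\ S x.

(* kappa^{<lambda} <= kappa : for every nu < lambda (a subset of L of size < |L|),
   kappa^nu <= kappa. *)
Definition pow_below_le (K L : Type) : Prop :=
  forall S : L -> Prop, ~ inj L {x : L | S x} -> inj ({x : L | S x} -> K) K.

(* functional relations (partial functions given by their graphs) *)
Definition functional {A B : Type} (r : A -> B -> Prop) : Prop :=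
  forall a b c, r a b -> r a c -> b = c.

Definition small_pfun (K L : Type) : Type :=
  { r : K -> K -> Prop |
    functional r /\ lt_card {xy : K * K | r xy.1 xy.2} L }.

(* Main.v *)
Require Import Defs.
From mathcomp Require Import all_boot.
From Stdlib Require Import PeanoNat Classical ClassicalEpsilon FunctionalExtensionality PropExtensionality ProofIrrelevance.

Lemma inj_refl A : inj A A.
Proof. exists id; auto. Qed.

Lemma inj_trans {A B C} : inj A B -> inj B C -> inj A C.
Proof. move=> [f hf] [g hg]; exists (fun x => g (f x)); auto. Qed.

Lemma inj_arrow {D A B : Type} : inj A B -> inj (D -> A) (D -> B).
Proof.
move=> [f hf]; exists (fun g d => f (g d)) => g1 g2 E.
apply: functional_extensionality => d; apply: hf.
exact: (f_equal (fun h => h d) E).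
Qed.

Lemma inj_prod {A B C D} : inj A C -> inj B D -> inj (A*B) (C*D).
Proof.
move=> [f hf] [g hg]; exists (fun p => (f p.1, g p.2)) => [[a b] [a' b']] /= E.
case: E => /hf -> /hg -> //.
Qed.

Lemma inj_option {A B} : inj A B -> inj (option A) (option B).
Proof.
move=> [f hf]; exists (fun o => match o with Some a => Some (f a) | None => None end).
by move=> [a|] [b|] //= [] /hf ->.
Qed.

Lemma inj_sub {A:Type} {P:A->Prop} : inj {x | P x} A.
Proof. exists (@proj1_sig _ _) => [[x hx] [y hy]] /= E; subst; f_equal; apply: proof_irrelevance. Qed.

Lemma sig_eq {A:Type} {P:A->Prop} (x y : {a | P a}) : proj1_sig x = proj1_sig y -> x = y.
Proof. case: x => x hx; case: y => y hy /= E; subst; f_equal; apply: proof_irrelevance. Qed.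

Lemma two_elts {A} : infinite A -> exists a b : A, a <> b.
Proof. move=> [e he]; exists (e 0), (e 1) => /he; discriminate. Qed.

Lemma inj_option_self {A} : inj (A*A) A -> infinite A -> inj (option A) A.
Proof.
move=> [c hc] /two_elts [a0 [a1 ne]].
exists (fun o => match o with Some a => c (a, a0) | None => c (a0, a1) end).
move=> [x|] [y|] // /hc [] => *; subst => //.
Qed.

Definition Fstep (A B : Type) (R : A -> A -> Prop) (a : A)
  (rec : forall a', R a' a -> option B) : option B :=
  match excluded_middle_informative
          (exists b, ~ exists a' (h : R a' a), rec a' h = Some b) with
  | left H => Some (proj1_sig (constructive_indefinite_description _ H))
  | right _ => None
  end.

Lemma core_rec (A B : Type) (R : A -> A -> Prop) : strict_wellorder A R ->
  exists f : A -> option B,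
    (forall x y c, f x = Some c -> f y = Some c -> x = y) /\
    (forall x, f x = None -> forall c, exists y, R y x /\ f y = Some c).
Proof.
move=> [irr [tr [tot wf]]].
pose f := Fix wf (fun _ => option B) (@Fstep A B R).
have feq : forall a, f a = @Fstep A B R a (fun a' _ => f a').
  move=> a; rewrite /f Fix_eq //.
  move=> x g1 g2 H.
  have -> : g1 = g2; last by [].
  apply: functional_extensionality_dep => y; apply: functional_extensionality_dep => p; exact: H.
have key : forall x y c, R x y -> f x = Some c -> f y = Some c -> False.
  move=> x y c Rxy fx; rewrite feq /Fstep.
  case: excluded_middle_informative => [H|H] //.
  case: (constructive_indefinite_description _ H) => b /= hb [] E; subst b.
  by apply: hb; exists x, Rxy.
exists f; split.
- move=> x y c fx fy; case: (tot x y) => [Rxy|[//|Ryx]].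
  + by case: (key _ _ _ Rxy fx fy).
  + by case: (key _ _ _ Ryx fy fx).
- move=> x; rewrite feq /Fstep; case: excluded_middle_informative => [H|H] // _ c.
  apply: NNPP => nc; apply: H; exists c => [[a' [h e]]]; apply: nc; by exists a'.
Qed.

Lemma wo_global (A B : Type) (R : A -> A -> Prop) : strict_wellorder A R ->
  inj A B \/ exists a, inj B {x | R x a}.
Proof.
move=> hR; case: (@core_rec A B R hR) => f [fi fn].
case: (classic (exists x, f x = None)) => [[x fx]|H].
- right; exists x.
  have ex : forall c, {y | R y x /\ f y = Some c}.
    move=> c; apply: constructive_indefinite_description; exact: fn.
  exists (fun c => exist (fun y => R y x) (proj1_sig (ex c)) (proj1 (proj2_sig (ex c)))).
  move=> c1 c2 /(f_equal (@proj1_sig _ _)) /= E.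
  have := proj2 (proj2_sig (ex c1)); have := proj2 (proj2_sig (ex c2)).
  rewrite E => -> []; done.
- left.
  have ex : forall x, {b | f x = Some b}.
    move=> x; apply: constructive_indefinite_description.
    case E: (f x) => [b|]; first by exists b.
    by case: H; exists x.
  exists (fun x => proj1_sig (ex x)) => x y E.
  apply: (fi x y (proj1_sig (ex x))); first exact: proj2_sig (ex x).
  rewrite E; exact: proj2_sig (ex y).
Qed.

Lemma wo_rel (A B : Type) (R : A -> A -> Prop) (a : A) : strict_wellorder A R ->
  inj {x | R x a} B \/ exists b, R b a /\ inj B {x | R x b}.
Proof.
move=> hR; case: (@core_rec A B R hR) => f [fi fn].
case: (classic (exists x, R x a /\ f x = None)) => [[x [Rxa fx]]|H].
- right; exists x; split=> //.
  have ex : forall c, {y | R y x /\ f y = Some c}.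
    move=> c; apply: constructive_indefinite_description; exact: fn.
  exists (fun c => exist (fun y => R y x) (proj1_sig (ex c)) (proj1 (proj2_sig (ex c)))).
  move=> c1 c2 /(f_equal (@proj1_sig _ _)) /= E.
  have := proj2 (proj2_sig (ex c1)); have := proj2 (proj2_sig (ex c2)).
  rewrite E => -> []; done.
- left.
  have ex : forall x : {x | R x a}, {b | f (proj1_sig x) = Some b}.
    move=> [x hx]; apply: constructive_indefinite_description.
    case E: (f x) => [b|]; first by exists b.
    by case: H; exists x.
  exists (fun x => proj1_sig (ex x)) => x y E.
  apply: sig_eq.
  apply: (fi _ _ (proj1_sig (ex x))); first exact: proj2_sig (ex x).
  rewrite E; exact: proj2_sig (ex y).
Qed.

Lemma succ_inj {M W R} : is_succ_card M W R -> inj M W.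
Proof.
move=> [hR [seg nWM]]; case: (@wo_global _ M _ hR) => [/nWM []|[a h]].
apply: inj_trans h _; exact: inj_sub.
Qed.

Lemma wf_min (A : Type) (R : A -> A -> Prop) (P : A -> Prop) :
  well_founded R -> (exists x, P x) -> exists m, P m /\ forall y, R y m -> ~ P y.
Proof.
move=> wf [x px]; apply: NNPP => H.
suff : forall z, ~ P z by move/(_ x).
move=> z; elim: (wf z) => {}z _ IH pz; apply: H; exists z; split=> // y Ryz; exact: IH.
Qed.

Definition good (M W : Type) (R : W -> W -> Prop) :=
  is_succ_card M W R /\ inj (M*M) M /\ infinite M.

Lemma good_inh {M W R} : good M W R -> exists w : W, True.
Proof.
move=> [[_ [_ nWM]] _]; apply: NNPP => H; apply: nWM.
exists (fun w => False_rect M (H (ex_intro _ w I))) => x; case: (H (ex_intro _ x I)).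
Qed.

Lemma good_opt {M W R} : good M W R -> inj (option M) M.
Proof. move=> [_ [hMM hM]]; exact: inj_option_self. Qed.

Lemma good_nomax {M W R} : good M W R -> forall w, exists w', R w w'.
Proof.
move=> g w; have [[[irr [tr [tot wf]]] [seg nWM]] _] := g.
apply: NNPP => H; apply: nWM.
apply: (inj_trans _ (good_opt g)); apply: (inj_trans _ (inj_option (seg w))).
exists (fun x => match excluded_middle_informative (R x w) with
                 | left h => Some (exist (fun y => R y w) x h) | right _ => None end).
move=> x y; do 2 case: excluded_middle_informative => //.
- by move=> hy hx [].
- move=> ny nx _.
  have ex : forall z, ~ R z w -> z = w.
    move=> z nz; case: (tot z w) => [//|[//|h]]; case: H; by exists z.
  by rewrite (ex _ nx) (ex _ ny).
Qed.

Lemma good_bound {M W R I} : good M W R -> inj I M ->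
  forall f : I -> W, exists y, forall i, R (f i) y.
Proof.
move=> g [j hj] f; have [[[irr [tr [tot wf]]] [seg nWM]] [[c hc] hM]] := g.
apply: NNPP => H.
have H1 : forall w, exists i, R w (f i).
  move=> w; case: (good_nomax g w) => w' Rww'.
  apply: NNPP => H2; apply: H; exists w' => i.
  case: (tot (f i) w') => [//|[E|h]].
  - by case: H2; exists i; rewrite E.
  - by case: H2; exists i; apply: tr Rww' h.
have ch : forall w, {i | R w (f i)}.
  move=> w; apply: constructive_indefinite_description; exact: H1.
have [m0 _] : exists m : M, True by case: hM => e _; exists (e 0).
pose E (z w : W) : M := match excluded_middle_informative (R w z) with
   | left h => proj1_sig (constructive_indefinite_description _ (seg z)) (exist _ w h)
   | right _ => m0 end.
have EI : forall z w1 w2, R w1 z -> R w2 z -> E z w1 = E z w2 -> w1 = w2.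
  move=> z w1 w2 h1 h2; rewrite /E.
  case: excluded_middle_informative => [h1'|//]; case: excluded_middle_informative => [h2'|//].
  case: (constructive_indefinite_description _ (seg z)) => e he /= /he.
  by move/(f_equal (@proj1_sig _ _)).
apply: nWM.
exists (fun w => c (j (proj1_sig (ch w)), E (f (proj1_sig (ch w))) w)) => w1 w2 /hc [].
move/hj => Ei; move: (proj2_sig (ch w1)) (proj2_sig (ch w2)); rewrite Ei => h1 h2.
exact: EI.
Qed.

Lemma club_inter {M W R I} (C : I -> W -> Prop) : good M W R -> inj I M ->
  (forall i, club W R (C i)) -> club W R (fun w => forall i, C i w).
Proof.
move=> g hI hC; have [[[irr [tr [tot wf]]] [seg nWM]] _] := g.
split; last first.
  move=> x hx hcof i; apply: (proj2 (hC i)) => // y Ryx.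
  case: (hcof y Ryx) => z [Cz h]; exists z; split => //; exact: Cz.
move=> x.
have step_ex : forall u, exists y, R u y /\ forall i, exists z, C i z /\ R u z /\ R z y.
  move=> u.
  have zi : forall i, {z | C i z /\ R u z}.
    move=> i; apply: constructive_indefinite_description; case: (proj1 (hC i) u) => z [? ?].
    by exists z.
  have hoI : inj (option I) M by apply: inj_trans (inj_option hI) (good_opt g).
  case: (good_bound g hoI (fun o => match o with Some i => proj1_sig (zi i) | None => u end)).
  move=> y hy; exists y; split; first exact: (hy None).
  move=> i; exists (proj1_sig (zi i)); split; first exact: (proj1 (proj2_sig (zi i))).
  split; first exact: (proj2 (proj2_sig (zi i))).
  exact: (hy (Some i)).
pose step u := proj1_sig (constructive_indefinite_description _ (step_ex u)).
have stepP : forall u, R u (step u) /\ forall i, exists z, C i z /\ R u z /\ R z (step u).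
  move=> u; exact: proj2_sig (constructive_indefinite_description _ (step_ex u)).
pose s n := iter n step x.
have hnat : inj nat M by case: g => _ [_ h].
case: (good_bound g hnat s) => y0 hy0.
case: (@wf_min _ R (fun y => forall n, R (s n) y) wf (ex_intro _ y0 hy0)) => m [hm mmin].
exists m; split; last exact: (hm 0).
move=> i; apply: (proj2 (hC i)); first by exists x; exact: (hm 0).
move=> y Rym.
have [n hn] : exists n, ~ R (s n) y.
  apply: NNPP => H; apply: (mmin y Rym) => n; apply: NNPP => h; apply: H; by exists n.
case: (proj2 (stepP (s n)) i) => z [Cz [h1 h2]].
exists z; split => //; split.
- case: (tot (s n) y) => [//|[E|h]]; first by rewrite -E.
  exact: tr h h1.
- exact: tr h2 (hm n.+1).
Qed.

Lemma stat_nonempty {W R S} : (forall w, exists w', R w w') -> (exists w : W, True) ->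
  stationary W R S -> exists w, S w.
Proof.
move=> nm [w0 _] st; case: (st (fun _ => True)).
  by split => // x; case: (nm x) => y h; exists y.
move=> x [_ h]; by exists x.
Qed.

Lemma stat_True {M W R} : good M W R -> stationary W R (fun _ => True).
Proof.
move=> g C [unb _]; case: (good_inh g) => w0 _; case: (unb w0) => y [Cy _].
by exists y.
Qed.

Lemma stat_mono W R (S1 S2 : W -> Prop) : stationary W R S1 -> (forall w, S1 w -> S2 w) ->
  stationary W R S2.
Proof. move=> st h C cC; case: (st C cC) => x [? ?]; exists x; auto. Qed.

Lemma pigeon {M W R X} (g : W -> X) : good M W R -> inj X M ->
  exists c, stationary W R (fun w => g w = c).
Proof.
move=> gd hX; apply: NNPP => H.
have hC : forall c, {C | club W R C /\ forall w, C w -> g w <> c}.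
  move=> c; apply: constructive_indefinite_description.
  apply: NNPP => H2; apply: H; exists c => C cC; apply: NNPP => H3; apply: H2.
  exists C; split => // w Cw E; apply: H3; by exists w.
have cl := club_inter (fun c => proj1_sig (hC c)) gd hX (fun c => proj1 (proj2_sig (hC c))).
case: (good_inh gd) => w0 _; case: (proj1 cl w0) => w [Cw _].
exact: (proj2 (proj2_sig (hC (g w))) w (Cw (g w)) erefl).
Qed.

Lemma nat_bool_false : ~ inj nat bool.
Proof.
move=> [f hf]; have h01 : f 0 <> f 1 by move/hf.
have h02 : f 0 <> f 2 by move/hf.
have h12 : f 1 <> f 2 by move/hf.
by move: h01 h02 h12; case: (f 0); case: (f 1); case: (f 2).
Qed.

Lemma KK_inj (K L : Type) : infinite L -> pow_below_le K L -> inj (K*K) K.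
Proof.
move=> hL hpow; have [e he] := hL.
pose l0 := e 0; pose l1 := e 1.
have ne : l0 <> l1 by move/he.
pose S := fun l => l = l0 \/ l = l1.
have nLS : ~ inj L {x : L | S x}.
  move=> hLS; apply: nat_bool_false.
  apply: (inj_trans hL); apply: (inj_trans hLS).
  exists (fun s => match excluded_middle_informative (proj1_sig s = l0) with left _ => true | right _ => false end).
  move=> [x hx] [y hy] /=.
  case: excluded_middle_informative => h1; case: excluded_middle_informative => h2 //= _; apply: sig_eq => /=.
  - by rewrite h1 h2.
  - by case: hx h1 => // ->; case: hy h2 => // ->.
apply: (inj_trans _ (hpow S nLS)).
exists (fun p (s : {x | S x}) => match excluded_middle_informative (proj1_sig s = l0) with left _ => p.1 | right _ => p.2 end).
move=> [a b] [a' b'] E.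
have E0 := f_equal (fun h => h (exist S l0 (or_introl erefl))) E.
have E1 := f_equal (fun h => h (exist S l1 (or_intror erefl))) E.
move: E0 E1 => /=.
case: excluded_middle_informative => [_|[]//]; case: excluded_middle_informative => [/esym/ne[]|_] /= -> -> //.
Qed.

Lemma small_inj (K L W : Type) (R : W -> W -> Prop) : infinite K -> infinite L ->
  pow_below_le K L -> inj L K -> is_succ_card K W R -> inj (small_pfun K L) K.
Proof.
move=> hKinf hLinf hpow hLK h0.
have KK := @KK_inj K L hLinf hpow.
have hOK : inj (option (K*K)) K := inj_trans (inj_option KK) (inj_option_self KK hKinf).
have [hRw [seg nWK]] := h0; have [irr [tr [tot wf]]] := hRw.
have KW := succ_inj h0.
have [x0 hx0] : exists x, inj L {y | R y x}.
  case: (@wo_global W L R hRw) => [h|//]; case: nWK; exact: inj_trans h hLK.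
case: (@wf_min W R (fun x => inj L {y | R y x}) wf (ex_intro _ x0 hx0)) => a [ha amin].
have F1 : forall b, R b a -> inj {y | R y b} L.
  move=> b Rba; case: (@wo_rel W L R b hRw) => [//|[b' [Rb'b h]]].
  by case: (amin b' (tr _ _ _ Rb'b Rba) h).
have F2 : forall X, inj X L -> ~ inj L X -> exists b, R b a /\ inj X {y | R y b}.
  move=> X hXL nLX; case: (@wo_rel W X R a hRw) => [h|//]; case: nLX; exact: inj_trans ha h.
have hcodeB : forall b, R b a -> inj ({y | R y b} -> K) K.
  move=> b Rba; case: (F1 b Rba) => i hi.
  pose S := fun l => exists w, i w = l.
  pose inv := fun s : {l | S l} => constructive_indefinite_description _ (proj2_sig s).
  have nLS : ~ inj L {l | S l}.
    move=> h; apply: (amin b Rba); apply: (inj_trans h).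
    exists (fun s => proj1_sig (inv s)) => s1 s2 E; apply: sig_eq.
    rewrite -(proj2_sig (inv s1)) -(proj2_sig (inv s2)) E //.
  apply: (inj_trans _ (hpow S nLS)).
  exists (fun phi s => phi (proj1_sig (inv s))) => p1 p2 E.
  apply: functional_extensionality => w.
  have := f_equal (fun h => h (exist S (i w) (ex_intro _ w erefl))) E => /=.
  have -> // : proj1_sig (inv (exist S (i w) (ex_intro _ w erefl))) = w.
  apply: hi; exact: (proj2_sig (inv (exist S (i w) (ex_intro _ w erefl)))).
case: KK => c hc; case: hOK => oK hoK; case: hKinf => ek _; pose k0 := ek 0.
pose Gr (r : small_pfun K L) := {xy : K*K | proj1_sig r xy.1 xy.2}.
have bex : forall r : small_pfun K L, {b | R b a /\ inj (Gr r) {y | R y b}}.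
  move=> r; apply: constructive_indefinite_description; case: (proj2 (proj2_sig r)) => h1 h2; exact: (F2 _ h1 h2).
pose b r := proj1_sig (bex r).
have eex : forall r, {f : Gr r -> {y | R y (b r)} | forall x y, f x = f y -> x = y}.
  move=> r; apply: constructive_indefinite_description; exact: (proj2 (proj2_sig (bex r))).
pose ef r := proj1_sig (eex r).
pose hr r w := match excluded_middle_informative (exists g : Gr r, proj1_sig (ef r g) = w) with
  | left H => Some (proj1_sig (proj1_sig (constructive_indefinite_description _ H)))
  | right _ => None end.
have hr_char : forall r x y, proj1_sig r x y <-> exists w, hr r w = Some (x, y).
  move=> r x y; split.
  - move=> rxy; exists (proj1_sig (ef r (exist _ (x, y) rxy))); rewrite /hr.
    case: excluded_middle_informative => [H|[]]; last by eexists.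
    case: (constructive_indefinite_description _ H) => g /= Eg.
    have : g = exist _ (x, y) rxy by apply: (proj2_sig (eex r)); apply: sig_eq.
    by move=> ->.
  - case=> w; rewrite /hr; case: excluded_middle_informative => [H|//] [] E.
    have := proj2_sig (proj1_sig (constructive_indefinite_description _ H)).
    by rewrite E.
have hr_none : forall r w, ~ R w (b r) -> hr r w = None.
  move=> r w nR; rewrite /hr; case: excluded_middle_informative => [[g Eg]|//].
  case: nR; rewrite -Eg; exact: (proj2_sig (ef r g)).
pose cw w := match excluded_middle_informative (R w a) with
  | left h => proj1_sig (constructive_indefinite_description _ (seg a)) (exist _ w h)
  | right _ => k0 end.
have cwI : forall w1 w2, R w1 a -> R w2 a -> cw w1 = cw w2 -> w1 = w2.
  move=> w1 w2 h1 h2; rewrite /cw.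
  case: excluded_middle_informative => [h1'|//]; case: excluded_middle_informative => [h2'|//].
  case: (constructive_indefinite_description _ (seg a)) => e he /= /he.
  by move/(f_equal (@proj1_sig _ _)).
pose hcd bb (phi : {y | R y bb} -> K) := match excluded_middle_informative (R bb a) with
  | left h => proj1_sig (constructive_indefinite_description _ (hcodeB bb h)) phi
  | right _ => k0 end.
have hcdI : forall bb, R bb a -> forall p1 p2, hcd bb p1 = hcd bb p2 -> p1 = p2.
  move=> bb h p1 p2; rewrite /hcd; case: excluded_middle_informative => [h'|//].
  exact: (proj2_sig (constructive_indefinite_description _ (hcodeB bb h'))).
pose Phi bb (h : W -> option (K*K)) := hcd bb (fun w : {y | R y bb} => oK (h (proj1_sig w))).
exists (fun r => c (cw (b r), Phi (b r) (hr r))) => r1 r2 /hc [].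
have Rb1 : R (b r1) a := proj1 (proj2_sig (bex r1)).
have Rb2 : R (b r2) a := proj1 (proj2_sig (bex r2)).
move/(cwI _ _ Rb1 Rb2) => Eb.
rewrite /Phi -Eb => /(hcdI _ Rb1) E.
have Eh : forall w, hr r1 w = hr r2 w.
  move=> w; case: (classic (R w (b r1))) => h.
  - apply: hoK; exact: (f_equal (fun f => f (exist _ w h)) E).
  - rewrite !hr_none // -Eb //.
apply: sig_eq; apply: functional_extensionality => x; apply: functional_extensionality => y.
apply: propositional_extensionality; rewrite !hr_char.
by split; case=> w hw; exists w; rewrite ?Eh // -Eh.
Qed.

Definition upd {d : nat} {Kap : nat -> Type} (x : forall i : 'I_d, Kap i) (j : nat) (a : Kap j) :
  forall i : 'I_d, Kap i :=
  fun k => match Nat.eq_dec j (nat_of_ord k) with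
           | left e => eq_rect j Kap a (nat_of_ord k) e
           | right _ => x k end.

Lemma cast_ord {d : nat} {Kap : nat -> Type} (x : forall i : 'I_d, Kap i) (k k' : 'I_d)
  (e : nat_of_ord k = nat_of_ord k') : eq_rect _ Kap (x k) _ e = x k'.
Proof.
have E : k = k' by apply: ord_inj.
subst k'; by rewrite (eq_irrelevance e erefl).
Qed.

Lemma upd_self {d : nat} {Kap : nat -> Type} (x : forall i : 'I_d, Kap i) (k : 'I_d) :
  upd x (nat_of_ord k) (x k) = x.
Proof.
apply: functional_extensionality_dep => k'; rewrite /upd.
case: Nat.eq_dec => [e|//]; exact: cast_ord.
Qed.

Definition dep {d : nat} {Kap : nat -> Type} {X : Type} (f : (forall i : 'I_d, Kap i) -> X) (j : nat) :=
  forall x y, (forall i : 'I_d, i < j -> x i = y i) -> f x = f y.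

Lemma dep_upd {d : nat} {Kap : nat -> Type} {X : Type} (f : (forall i : 'I_d, Kap i) -> X) j a :
  dep f j.+1 -> dep (fun x => f (upd x j a)) j.
Proof.
move=> hf x y H; apply: hf => k hk; rewrite /upd.
case: Nat.eq_dec => [//|n]; apply: H.
by rewrite ltn_neqAle -ltnS hk andbT; apply/eqP => E; apply: n; rewrite E.
Qed.

Fixpoint Cur (Kap : nat -> Type) (X : Type) (j : nat) : Type :=
  match j with 0 => X | S j' => Kap j' -> Cur Kap X j' end.

Fixpoint col {d : nat} {Kap : nat -> Type} {X : Type} (x0 : forall i : 'I_d, Kap i) (j : nat)
  (f : (forall i : 'I_d, Kap i) -> X) {struct j} : Cur Kap X j :=
  match j return Cur Kap X j with
  | 0 => f x0
  | S j' => fun a : Kap j' => col x0 j' (fun x => f (upd x j' a))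
  end.

Lemma col_inj {d : nat} {Kap : nat -> Type} {X : Type} (x0 : forall i : 'I_d, Kap i) :
  forall j, j <= d -> forall f g : (forall i : 'I_d, Kap i) -> X,
  dep f j -> dep g j -> col x0 j f = col x0 j g -> forall x, f x = g x.
Proof.
elim=> [|j IH] hjd f g hf hg /= E x.
- rewrite (hf x x0) // (hg x x0) //.
- have E' : forall a, col x0 j (fun x => f (upd x j a)) = col x0 j (fun x => g (upd x j a)).
    move=> a; exact: (f_equal (fun h => h a) E).
  have H2 : forall a y, f (upd y j a) = g (upd y j a).
    move=> a; apply: (IH (ltnW hjd)); [exact: dep_upd | exact: dep_upd | exact: E'].
  pose jo := Ordinal hjd.
  have := H2 (x jo) x; by rewrite (upd_self x jo).
Qed.

Lemma KapProp (A : Type) : inj A (A -> Prop).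
Proof.
exists (fun w v => v = w) => w1 w2 E.
have := f_equal (fun h => h w1) E => /= E1; by rewrite -E1.
Qed.

Lemma SZ (K X : Type) (d : nat) (Kap : nat -> Type) (lt : forall i : nat, Kap i -> Kap i -> Prop) :
  is_succ_card K (Kap 0) (lt 0) -> inj (K*K) K -> infinite K -> inj X K ->
  (forall i : nat, i.+1 < d ->
     exists M : Type,
       inj (Kap i -> Prop) M /\ inj (Kap i -> M) M /\
       is_succ_card M (Kap i.+1) (lt i.+1)) ->
  forall j, j < d -> exists M : Type, inj (Cur Kap X j) M /\ good M (Kap j) (lt j).
Proof.
move=> h0 hKK hKinf hX hsucc; elim=> [|j IH] hj.
- by exists K; split => //; split.
- case: (IH (ltnW hj)) => M' [hC' [hs' [hMM' hMinf']]].
  case: (hsucc j hj) => M [hPM [hFM hsM]].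
  have M'W : inj M' (Kap j) := succ_inj hs'.
  have M'M : inj M' M := inj_trans M'W (inj_trans (KapProp _) hPM).
  have hnatW : infinite (Kap j) := inj_trans hMinf' M'W.
  exists M; split; [|split; [exact: hsM|split]].
  + apply: (inj_trans _ hFM); apply: inj_arrow; exact: inj_trans hC' M'M.
  + apply: (inj_trans _ hFM).
    case: (two_elts hnatW) => a0 [a1 ne].
    exists (fun p w => match excluded_middle_informative (w = a0) with left _ => p.1 | right _ => p.2 end).
    move=> [m1 m2] [m1' m2'] E.
    have E0 := f_equal (fun h => h a0) E; have E1 := f_equal (fun h => h a1) E.
    move: E0 E1 => /=.
    case: excluded_middle_informative => [_|[]//]; case: excluded_middle_informative => [/esym/ne[]|_] /= -> -> //.
  + exact: inj_trans hMinf' M'M.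
Qed.

Theorem mainTheorem4
  (K L : Type)
  (hKinf : infinite K) (hLinf : infinite L)
  (hpow : pow_below_le K L) (hLK : inj L K)
  (d : nat) (hd : 0 < d)
  (Kap : nat -> Type) (lt : forall i : nat, Kap i -> Kap i -> Prop)
  (h0 : is_succ_card K (Kap 0) (lt 0))
  (hsucc : forall i : nat, i.+1 < d ->
     exists M : Type,
       inj (Kap i -> Prop) M /\ inj (Kap i -> M) M /\
       is_succ_card M (Kap i.+1) (lt i.+1))
  (p : (forall i : 'I_d, Kap i) -> small_pfun K L) :
  exists S : forall i : 'I_d, Kap i -> Prop,
    (forall i : 'I_d, stationary (Kap i) (lt i) (S i)) /\
    (forall (x y : forall i : 'I_d, Kap i),
        (forall i, S i (x i)) -> (forall i, S i (y i)) ->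
        forall a b c, proj1_sig (p x) a b -> proj1_sig (p y) a c -> b = c).
Proof.
have hKK := @KK_inj K L hLinf hpow.
have hP : inj (small_pfun K L) K := @small_inj K L _ _ hKinf hLinf hpow hLK h0.
have sz := @SZ K (small_pfun K L) d Kap lt h0 hKK hKinf hP hsucc.
have inh : forall i : 'I_d, {w : Kap i | True}.
  move=> i; apply: constructive_indefinite_description.
  case: (sz i (ltn_ord i)) => M [_ gM]; exact: good_inh gM.
pose x0 := fun i : 'I_d => proj1_sig (inh i).
have H : forall j, j <= d -> forall q : (forall i : 'I_d, Kap i) -> small_pfun K L, dep q j ->
  exists S : forall i : 'I_d, Kap i -> Prop,
    (forall i : 'I_d, stationary (Kap i) (lt i) (S i)) /\
    (forall i : 'I_d, j <= i -> forall w, S i w) /\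
    exists v, forall x, (forall i : 'I_d, S i (x i)) -> q x = v.
  elim=> [|j IH] hj q hq.
  - exists (fun _ _ => True); split; [|split => //].
    + move=> i; case: (sz i (ltn_ord i)) => M [_ gM]; exact: stat_True gM.
    + by exists (q x0) => x _; apply: hq.
  - case: (sz j hj) => M [hCM gM].
    pose g := fun a : Kap j => col x0 j (fun x => q (upd x j a)).
    case: (pigeon g gM hCM) => c stT.
    case: (stat_nonempty (good_nomax gM) (good_inh gM) stT) => a0 ha0.
    case: (IH (ltnW hj) (fun x => q (upd x j a0)) (dep_upd q j a0 hq)) => S' [st' [hT' [v hv]]].
    exists (fun i w => S' i w /\ forall e : nat_of_ord i = j, g (eq_rect _ Kap w j e) = c).
    split; [|split].
    + move=> i; case: (eqVneq (nat_of_ord i) j) => [E|ne].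
      * subst j; apply: (stat_mono _ _ _ _ stT) => w gw; split; first exact: hT'.
        by move=> e; rewrite (eq_irrelevance e erefl).
      * apply: (stat_mono _ _ _ _ (st' i)) => w hw; split => // e; by rewrite e eqxx in ne.
    + move=> i hi w; split; first by apply: hT'; exact: ltnW.
      move=> e; by rewrite e ltnn in hi.
    + exists v => x hx.
      pose jo := Ordinal hj.
      pose aj : Kap j := x jo.
      have T : g aj = c by exact: ((proj2 (hx jo)) erefl).
      have Ec : col x0 j (fun y => q (upd y j aj)) = col x0 j (fun y => q (upd y j a0)).
        by rewrite -/(g aj) -/(g a0) T ha0.
      have := @col_inj d Kap _ x0 j (ltnW hj) _ _ (dep_upd q j aj hq) (dep_upd q j a0 hq) Ec x.
      rewrite /aj (upd_self x jo) => ->; apply: hv => i; exact: (proj1 (hx i)).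
case: (H d (leqnn d) p) => [x y hxy|S [st [_ [v hv]]]].
  have -> // : x = y; apply: functional_extensionality_dep => i; exact: hxy.
exists S; split => // x y hx hy a b c.
rewrite (hv x hx) (hv y hy) => h1 h2.
exact: (proj1 (proj2_sig v) a b c h1 h2).
Qed.
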